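(* Let $d\ge1$ and let $G$ be the lattice $\mathbb Z^d$ (with $x\sim y$ iff $|x-y|_1=1$), unweighted, with Laplacian $\Delta u(x)=\frac1{\mu_0}\sum_{y\sim x}(u(y)-u(x))$ for a constant $\mu_0>0$, and $L=-\Delta$. Then for every $a>0$ there exists $v:\mathbb Z^d\to\mathbb R$ with $Lv(0)=a$, $Lv(0)\ge Lv(y)$ for all $y\sim0$, and $$\Delta\Psi_{\Upsilon'}(v)(0)=F(Lv(0))=F(a),$$ where $F(a)=\frac{D}{\mu_0^2}\exp\big(-\frac{\mu_0}{D}a\big)\big[\Upsilon\big(\frac{2\mu_0}{D}a\big)+(D-1)\Upsilon\big(-\frac{2\mu_0}{D(D-1)}a\big)\big]$ with $D=2d$.
   Context: $\Psi_H(v)(x)=\frac1{\mu_0}\sum_{y\sim x}H(v(y)-v(x))$ for $H:\mathbb R\to\mathbb R$; $\Upsilon(z)=e^z-1-z$, $\Upsilon'(z)=e^z-1$. *)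

(* Defs.v *)
From Stdlib Require Import Reals Lra Lia ZArith List.
Open Scope R_scope.

(* Points of Z^d: integer vectors indexed by coordinates 0..d-1
   (coordinates >= d are required to be 0, so this type is exactly Z^d). *)
Definition pt (d : nat) : Type :=
  { x : nat -> Z | forall i, (d <= i)%nat -> x i = 0%Z }.

Definition coord {d} (x : pt d) (i : nat) : Z := proj1_sig x i.

Definition origin (d : nat) : pt d :=
  exist _ (fun _ => 0%Z) (fun _ _ => eq_refl).

Definition sumR (n : nat) (f : nat -> R) : R :=
  fold_right Rplus 0 (map f (seq 0 n)).

Definition adj {d} (x y : pt d) : Prop :=
  sumR d (fun i => IZR (Z.abs (coord x i - coord y i))) = 1.

(* x + s e_i (only meaningful / used for i < d; for i >= d it is x). *)
Definition shift {d} (x : pt d) (i : nat) (s : Z) : pt d.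
Proof.
  refine (exist _ (fun j => if (Nat.eqb j i && Nat.ltb i d)%bool
                            then (coord x j + s)%Z else coord x j) _).
  intros j Hj. destruct (Nat.eqb j i) eqn:E1; destruct (Nat.ltb i d) eqn:E2;
    simpl; try exact (proj2_sig x j Hj).
  apply Nat.eqb_eq in E1; apply Nat.ltb_lt in E2; lia.
Defined.

Definition nbsum {d} (g : pt d -> R) (x : pt d) : R :=
  sumR d (fun i => g (shift x i 1%Z) + g (shift x i (-1)%Z)).

Definition Lap {d} (mu0 : R) (u : pt d -> R) (x : pt d) : R :=
  / mu0 * nbsum (fun y => u y - u x) x.

Definition Lop {d} (mu0 : R) (u : pt d -> R) (x : pt d) : R := - Lap mu0 u x.

Definition Psi {d} (mu0 : R) (H : R -> R) (v : pt d -> R) (x : pt d) : R :=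
  / mu0 * nbsum (fun y => H (v y - v x)) x.

Definition Ups (z : R) : R := exp z - 1 - z.
Definition Ups' (z : R) : R := exp z - 1.

Definition Fd (d : nat) (mu0 a : R) : R :=
  let D := INR (2 * d) in
  D / (mu0 ^ 2) * exp (- (mu0 / D) * a) *
  (Ups (2 * mu0 / D * a) + (D - 1) * Ups (- (2 * mu0 / (D * (D - 1))) * a)).

(* Main.v *)
From Stdlib Require Import Reals Lra Lia ZArith List.
Require Import Defs.
Open Scope R_scope.

Lemma fold_plus_acc (l : list R) x : fold_right Rplus x l = fold_right Rplus 0 l + x.
Proof. induction l; simpl; [ring | rewrite IHl; ring]. Qed.

Lemma sumR_S n f : sumR (S n) f = sumR n f + f n.
Proof.
  unfold sumR. rewrite seq_S, map_app, fold_right_app. simpl.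
  rewrite fold_plus_acc. ring.
Qed.

Lemma sumR_ext n f g : (forall k, (k < n)%nat -> f k = g k) -> sumR n f = sumR n g.
Proof.
  induction n; intros H; [reflexivity|]. rewrite !sumR_S, IHn, H; auto.
Qed.

Lemma sumR_lin n A B f : sumR n (fun k => A + B * f k) = INR n * A + B * sumR n f.
Proof.
  induction n; [unfold sumR; simpl; ring|]. rewrite !sumR_S, IHn, S_INR. ring.
Qed.

Lemma sumR_change n f g i : (i < n)%nat ->
  (forall k, (k < n)%nat -> k <> i -> f k = g k) -> sumR n f = sumR n g - g i + f i.
Proof.
  induction n; intros Hi H; [lia|]. rewrite !sumR_S.
  destruct (Nat.eq_dec i n) as [->|Hne].
  - rewrite (sumR_ext n f g); [ring|]. intros k Hk; apply H; lia.
  - rewrite IHn by (try lia; intros; apply H; lia). rewrite (H n) by lia. ring.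
Qed.

Lemma sumR_nonneg n f : (forall k, (k < n)%nat -> 0 <= f k) -> 0 <= sumR n f.
Proof.
  induction n; intros H; [unfold sumR; simpl; lra|]. rewrite sumR_S.
  assert (0 <= sumR n f) by (apply IHn; intros; apply H; lia).
  assert (0 <= f n) by (apply H; lia). lra.
Qed.

Lemma sumR_le n f i : (forall k, (k < n)%nat -> 0 <= f k) -> (i < n)%nat -> f i <= sumR n f.
Proof.
  induction n; intros H Hi; [lia|]. rewrite sumR_S.
  assert (0 <= sumR n f) by (apply sumR_nonneg; intros; apply H; lia).
  assert (0 <= f n) by (apply H; lia).
  destruct (Nat.eq_dec i n) as [->|Hne]; [lra|].
  assert (f i <= sumR n f) by (apply IHn; [intros; apply H; lia | lia]). lra.
Qed.

Definition Nn {d} (x : pt d) : R := sumR d (fun i => IZR (Z.abs (coord x i))).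

Lemma coord_shift d (x : pt d) i s k : coord (shift x i s) k =
  if (Nat.eqb k i && Nat.ltb i d)%bool then (coord x k + s)%Z else coord x k.
Proof. reflexivity. Qed.

Lemma N_shift d (x : pt d) i s : (i < d)%nat ->
  Nn (shift x i s) = Nn x - IZR (Z.abs (coord x i)) + IZR (Z.abs (coord x i + s)).
Proof.
  intros Hi. unfold Nn.
  rewrite (sumR_change d (fun k => IZR (Z.abs (coord (shift x i s) k))) (fun k => IZR (Z.abs (coord x k))) i); auto.
  - f_equal. f_equal. f_equal. rewrite coord_shift, Nat.eqb_refl. replace (Nat.ltb i d) with true
      by (symmetry; apply Nat.ltb_lt; auto). reflexivity.
  - intros k Hk Hne. rewrite coord_shift.
    replace (Nat.eqb k i) with false by (symmetry; apply Nat.eqb_neq; auto). reflexivity.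
Qed.

Lemma nb_rad d (y : pt d) (g : pt d -> R) (G : R -> R) :
  (forall j, (j < d)%nat -> (Z.abs (coord y j) <= 1)%Z) ->
  (forall j t, (j < d)%nat -> (t = 1 \/ t = -1)%Z -> g (shift y j t) = G (Nn (shift y j t))) ->
  nbsum g y = INR d * (2 * G (Nn y + 1)) + (G (Nn y - 1) - G (Nn y + 1)) * Nn y.
Proof.
  intros Hb Hg. unfold nbsum.
  rewrite (sumR_ext _ _ (fun j => 2 * G (Nn y + 1) +
     (G (Nn y - 1) - G (Nn y + 1)) * IZR (Z.abs (coord y j)))).
  - rewrite sumR_lin. reflexivity.
  - intros j Hj. rewrite !Hg by (auto; lia). rewrite !N_shift by auto.
    set (n := Nn y).
    assert (Hc : coord y j = (-1)%Z \/ coord y j = 0%Z \/ coord y j = 1%Z)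
      by (specialize (Hb j Hj); lia).
    destruct Hc as [E|[E|E]]; rewrite E; cbn [Z.abs Z.add Z.pos_sub Z.opp Pos.add].
    + replace (n - 1 + 0) with (n - 1) by ring.
      replace (n - 1 + 2) with (n + 1) by ring. ring.
    + replace (n - 0 + 1) with (n + 1) by ring. ring.
    + replace (n - 1 + 0) with (n - 1) by ring.
      replace (n - 1 + 2) with (n + 1) by ring. ring.
Qed.

Definition phi (c D m : R) := (-c + c / (D - 1)) * m + (- c / (D - 1)) * (m * m).

Definition Pf (mu0 c D Dd m : R) :=
  / mu0 * (Dd * (2 * Ups' (phi c D (m + 1) - phi c D m)) +
   (Ups' (phi c D (m - 1) - phi c D m) - Ups' (phi c D (m + 1) - phi c D m)) * m).

Lemma N_origin d : Nn (origin d) = 0.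
Proof.
  unfold Nn. rewrite (sumR_ext _ _ (fun _ => 0 + 0 * 0)); [|intros; simpl; ring].
  rewrite sumR_lin. ring.
Qed.

Lemma bound_origin d j : (Z.abs (coord (origin d) j) <= 1)%Z.
Proof. simpl. lia. Qed.

Lemma bound_shift0 d i t j : (t = 1 \/ t = -1)%Z ->
  (Z.abs (coord (shift (origin d) i t) j) <= 1)%Z.
Proof.
  intros Ht. rewrite coord_shift. simpl coord.
  destruct (Nat.eqb j i && Nat.ltb i d)%bool; lia.
Qed.

Theorem theorem3p12 (d : nat) (mu0 : R) (hd : (1 <= d)%nat) (hmu : 0 < mu0) :
  forall a : R, 0 < a ->
  exists v : pt d -> R,
    Lop mu0 v (origin d) = a /\
    (forall y : pt d, adj (origin d) y -> Lop mu0 v (origin d) >= Lop mu0 v y) /\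
    Lap mu0 (Psi mu0 Ups' v) (origin d) = Fd d mu0 (Lop mu0 v (origin d)) /\
    Fd d mu0 (Lop mu0 v (origin d)) = Fd d mu0 a.
Proof.
  intros a ha.
  set (Dd := INR d).
  set (D := 2 * Dd).
  assert (HDd : 1 <= Dd) by (unfold Dd; apply (le_INR 1); auto).
  assert (HD1 : D - 1 <> 0) by (unfold D; lra).
  assert (HD : D <> 0) by (unfold D; lra).
  set (c := mu0 / D * a).
  set (v := fun z : pt d => phi c D (Nn z)).
  assert (Lgen : forall x : pt d, (forall j, (j < d)%nat -> (Z.abs (coord x j) <= 1)%Z) ->
     Lop mu0 v x = - (/ mu0 * (Dd * (2 * (phi c D (Nn x + 1) - phi c D (Nn x))) +
        ((phi c D (Nn x - 1) - phi c D (Nn x)) - (phi c D (Nn x + 1) - phi c D (Nn x))) * Nn x))).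
  { intros x Hx. unfold Lop, Lap. f_equal. f_equal.
    apply (nb_rad d x _ (fun m => phi c D m - phi c D (Nn x))); auto. }
  assert (Pgen : forall x : pt d, (forall j, (j < d)%nat -> (Z.abs (coord x j) <= 1)%Z) ->
     Psi mu0 Ups' v x = Pf mu0 c D Dd (Nn x)).
  { intros x Hx. unfold Psi, Pf. f_equal.
    apply (nb_rad d x _ (fun m => Ups' (phi c D m - phi c D (Nn x)))); auto. }
  assert (L0 : Lop mu0 v (origin d) = a).
  { rewrite Lgen by (intros; apply bound_origin). rewrite N_origin.
    unfold phi, c, D. field. lra. }
  exists v. rewrite L0. split; [reflexivity|]. split; [|split; [|reflexivity]].
  - intros y Hadj.
    assert (HN : Nn y = 1).
    { unfold adj in Hadj. rewrite <- Hadj. unfold Nn. apply sumR_ext.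
      intros k _. simpl (coord (origin d) k). rewrite Z.sub_0_l, Z.abs_opp. reflexivity. }
    assert (Hb : forall j, (j < d)%nat -> (Z.abs (coord y j) <= 1)%Z).
    { intros j Hj. apply le_IZR. rewrite <- HN. unfold Nn.
      apply (sumR_le d (fun i => IZR (Z.abs (coord y i)))); auto.
      intros; apply IZR_le; lia. }
    rewrite Lgen by auto. rewrite HN. right.
    unfold phi, c, D. field. lra.
  - unfold Lap.
    rewrite (nb_rad d (origin d) _ (fun m => Pf mu0 c D Dd m - Pf mu0 c D Dd 0)).
    2: intros; apply bound_origin.
    2:{ intros j t Hj Ht. rewrite !Pgen; [ rewrite N_origin; reflexivity | intros; apply bound_origin | ].
        intros; apply bound_shift0; auto. }
    rewrite N_origin. unfold Pf, Fd, Ups', Ups.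
    replace (INR (2 * d)) with D by (unfold D, Dd; rewrite mult_INR; reflexivity).
    replace (phi c D (0 + 1 + 1) - phi c D (0 + 1)) with (- c + - (2 * c / (D - 1)))
      by (unfold phi; field; auto).
    replace (phi c D (0 + 1 - 1) - phi c D (0 + 1)) with c by (unfold phi; field; auto).
    replace (phi c D (0 + 1) - phi c D 0) with (- c) by (unfold phi; field; auto).
    replace (- (mu0 / D) * a) with (- c) by (unfold c; ring).
    replace (2 * mu0 / D * a) with (c + c) by (unfold c; field; auto).
    replace (- (2 * mu0 / (D * (D - 1))) * a) with (- (2 * c / (D - 1)))
      by (unfold c; field; auto).
    rewrite !exp_plus, !exp_Ropp.
    assert (HE : exp c <> 0) by (apply Rgt_not_eq, exp_pos).
    assert (HE2 : exp (2 * c / (D - 1)) <> 0) by (apply Rgt_not_eq, exp_pos).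
    generalize (exp (phi c D (0 - 1) - phi c D 0)) (exp c) (exp (2 * c / (D - 1))) HE HE2.
    intros X E1 E2 H1 H2. change (INR d) with Dd. unfold D in *. field. repeat split; try lra; auto.
Qed.
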